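(* Let $T$ be a countably infinite tournament. Then either $T$ has a quasi-kernel, or there exist vertices $x,y\in V(T)$ such that $V(T)=\Gamma^-(x)\cup\Gamma^+(y)$.
   Context: A tournament is a digraph in which every pair of distinct vertices is joined by exactly one directed edge. $\Gamma^+(v)$ and $\Gamma^-(v)$ denote the sets of out-neighbours and in-neighbours of $v$; for a vertex set $V'$, $\Gamma^+(V')$ is the union of the out-neighbourhoods of its vertices and $\Gamma^+_2(V')=V'\cup\Gamma^+(V')\cup\Gamma^+(\Gamma^+(V'))$. A quasi-kernel is an independent set $Q$ with $\Gamma^+_2(Q)=V(T)$. *)

(* Defs.v *)
Definition is_tournament {V : Type} (arc : V -> V -> Prop) : Prop :=
  (forall v, ~ arc v v) /\
  (forall u v, u <> v -> (arc u v \/ arc v u) /\ ~ (arc u v /\ arc v u)).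

Definition countably_infinite (V : Type) : Prop :=
  exists f : nat -> V,
    (forall m n, f m = f n -> m = n) /\ (forall v, exists n, f n = v).

Definition out_nbhd {V : Type} (arc : V -> V -> Prop) (v : V) : V -> Prop :=
  fun w => arc v w.
Definition in_nbhd {V : Type} (arc : V -> V -> Prop) (v : V) : V -> Prop :=
  fun w => arc w v.

Definition out_set {V : Type} (arc : V -> V -> Prop) (S : V -> Prop) : V -> Prop :=
  fun w => exists s, S s /\ out_nbhd arc s w.

Definition out2_set {V : Type} (arc : V -> V -> Prop) (S : V -> Prop) : V -> Prop :=
  fun w => S w \/ out_set arc S w \/ out_set arc (out_set arc S) w.

Definition independent {V : Type} (arc : V -> V -> Prop) (Q : V -> Prop) : Prop :=
  forall u v, Q u -> Q v -> ~ arc u v.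

Definition quasi_kernel {V : Type} (arc : V -> V -> Prop) (Q : V -> Prop) : Prop :=
  independent arc Q /\ (forall w, out2_set arc Q w).

(* Main.v *)
Require Import Defs.
From Stdlib Require Import Classical.

Theorem mainTheorem9 (V : Type) (arc : V -> V -> Prop) :
  is_tournament arc -> countably_infinite V ->
  (exists Q : V -> Prop, quasi_kernel arc Q) \/
  (exists x y : V, forall v : V, in_nbhd arc x v \/ out_nbhd arc y v).
Proof.
  intros [Hirr Htot] [f _].
  destruct (classic (exists x y : V, forall v : V, in_nbhd arc x v \/ out_nbhd arc y v))
    as [H|H]; [right; exact H|left].
  set (q := f 0).
  exists (fun v => v = q). split.
  - intros u v -> ->. apply Hirr.
  - intros w. unfold out2_set, out_set, out_nbhd.
    assert (Hv : exists v, ~ arc v q /\ ~ arc w v).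
    { apply NNPP; intro Hn. apply H. exists q, w. intro v.
      unfold in_nbhd, out_nbhd.
      destruct (classic (arc v q)) as [a|a]; [left; exact a|].
      destruct (classic (arc w v)) as [b|b]; [right; exact b|].
      exfalso; apply Hn; exists v; auto. }
    destruct Hv as [v [Hvq Hwv]].
    destruct (classic (v = q)) as [->|Hne].
    + destruct (classic (w = q)) as [e|Hwq]; [left; exact e|].
      right; left. exists q; split; [reflexivity|].
      destruct (proj1 (Htot q w (fun e => Hwq (eq_sym e)))); tauto.
    + assert (Hqv : arc q v).
      { destruct (proj1 (Htot q v (fun e => Hne (eq_sym e)))); tauto. }
      destruct (classic (v = w)) as [<-|Hvw].
      * right; left. exists q; auto.
      * right; right. exists v; split.
        -- exists q; auto.
        -- destruct (proj1 (Htot v w Hvw)); tauto.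
Qed.
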